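(* For every integer $k\ge 1$, let $P_k=(p_{ij})$ be the $2^k\times 2^k$ matrix with $p_{ij}=1$ if there is $n\in\{1,\dots,2^k\}$ with $i=\sigma^{-1}_{2^k}(n+1)$ and $j=\sigma^{-1}_{2^k}(n)$ (with the convention $\sigma^{-1}_{2^k}(2^k+1)=\sigma^{-1}_{2^k}(1)$), and $p_{ij}=0$ otherwise. Then $P_k=A_{2^k}$ for every $k\ge 1$.
   Context: For every integer $k\ge 0$ the map $\sigma^{-1}_{2^k}:\{1,\dots,2^k\}\to\{1,\dots,2^k\}$ is defined recursively by $\sigma^{-1}_{2^0}(1)=1$ and, for $k\ge 1$ and $1\le n\le 2^{k-1}$, $\sigma^{-1}_{2^k}(2n-1)=\sigma^{-1}_{2^{k-1}}(n)$ and $\sigma^{-1}_{2^k}(2n)=2^k+1-\sigma^{-1}_{2^{k-1}}(n)$; it is a permutation of $\{1,\dots,2^k\}$ (the inverse of the permutation encoding the ordering of the superstable $2^k$-periodic orbit of a period-doubling cascade of a unimodal map). For $r\ge 1$, $I_r$ denotes the $r\times r$ identity matrix and $I^*_r=(a_{ij})$ the $r\times r$ matrix with $a_{ij}=1$ if $i+j=r+1$ and $a_{ij}=0$ otherwise. The matrices $A_{2^k}$ are defined by $$A_{2}=\begin{pmatrix}0&1\\1&0\end{pmatrix},\quad A_{4}=\begin{pmatrix}0&0&1&0\\0&0&0&1\\0&1&0&0\\1&0&0&0\end{pmatrix},\quad A_{2^k}=\begin{pmatrix}0 & A_{2^{k-2}} & 0\\ 0&0&I_{2^{k-2}}\\ I^*_{2^{k-1}}&0&0\end{pmatrix}\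 (k\ge 3),$$ where in the last block matrix the row blocks have sizes $2^{k-2},2^{k-2},2^{k-1}$ and the column blocks have sizes $2^{k-1},2^{k-2},2^{k-2}$, and $0$ denotes zero blocks. *)

(* Defs.v *)
From HB Require Import structures.
From mathcomp Require Import all_boot all_order all_algebra.
From mathcomp Require Import zify.
Set Implicit Arguments. Unset Strict Implicit. Unset Printing Implicit Defensive.
Import GRing.Theory.
Local Open Scope ring_scope.

(* sigma^{-1}_{2^k} on {1,...,2^k} (1-based, values outside are junk):
   sinv 0 n = 1;  sinv (k+1) (2m-1) = sinv k m;  sinv (k+1) (2m) = 2^(k+1)+1 - sinv k m. *)
Fixpoint sinv (k n : nat) : nat :=
  match k with
  | 0 => 1
  | k'.+1 => if odd n then sinv k' (n.+1./2)
             else (2 ^ k'.+1 + 1 - sinv k' n./2)%N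
  end.

Definition sinvc (k n : nat) : nat :=
  if n == (2 ^ k).+1 then sinv k 1 else sinv k n.

(* P_k : p_{ij} = 1 iff exists n in {1..2^k}, i = sinv(n+1), j = sinv(n)
   (matrix indices are 0-based, so i.+1, j.+1 are the paper's indices; n = m.+1). *)
Definition Pmx (R : nzRingType) (k : nat) : 'M[R]_(2 ^ k) :=
  \matrix_(i < 2 ^ k, j < 2 ^ k)
    ([exists m : 'I_(2 ^ k), (i.+1 == sinvc k m.+2) && (j.+1 == sinvc k m.+1)] %:R).

(* I^*_r : anti-identity, a_{ij} = 1 iff i + j = r + 1 (1-based), i.e. i + j = r - 1 (0-based) *)
Definition antiI (R : nzRingType) (r : nat) : 'M[R]_r :=
  \matrix_(i < r, j < r) ((i + j == r.-1)%N %:R).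

Definition A2 (R : nzRingType) : 'M[R]_2 :=
  \matrix_(i < 2, j < 2) (((i : nat), (j : nat)) \in [:: (0, 1); (1, 0)])%N%:R.

Definition A4 (R : nzRingType) : 'M[R]_4 :=
  \matrix_(i < 4, j < 4)
    (((i : nat), (j : nat)) \in [:: (0, 2); (1, 3); (2, 1); (3, 0)])%N%:R.

Lemma Amx_rows (k : nat) : (2 ^ k + (2 ^ k + 2 ^ k.+1) = 2 ^ k.+2)%N.
Proof. by rewrite !expnS; lia. Qed.

Lemma Amx_cols (k : nat) : (2 ^ k.+1 + (2 ^ k + 2 ^ k) = 2 ^ k.+2)%N.
Proof. by rewrite !expnS; lia. Qed.

(* A_{2^k}; for k >= 3 (k = k1 + 2, k1 >= 1) the block matrix
      [ 0       A_{2^{k-2}}  0        ]   rows   2^{k-2}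
      [ 0       0            I        ]   rows   2^{k-2}
      [ I^*     0            0        ]   rows   2^{k-1}
   cols 2^{k-1}  2^{k-2}     2^{k-2}
   The value at k = 0 is junk (A_1 is not defined in the paper). *)
Definition Ablock (R : nzRingType) (k1 : nat) (B : 'M[R]_(2 ^ k1)) :
  'M[R]_(2 ^ k1.+2) :=
  castmx (Amx_rows k1, Amx_cols k1)
    (col_mx (row_mx 0 (row_mx B 0))
      (col_mx (row_mx 0 (row_mx 0 1%:M))
              (row_mx (antiI R (2 ^ k1.+1)) (row_mx 0 0)))).

Fixpoint Amx (R : nzRingType) (k : nat) {struct k} : 'M[R]_(2 ^ k) :=
  match k return 'M[R]_(2 ^ k) with
  | 0 => 1%:M
  | 1 => A2 R
  | k1.+2 =>
      match k1 return 'M[R]_(2 ^ k1.+2) -> 'M[R]_(2 ^ k1.+2) with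
      | 0 => fun _ => A4 R
      | _.+1 => fun X => X
      end (Ablock (Amx R k1))
  end.

(* Main.v *)
Require Import Defs.
From mathcomp Require Import all_boot all_order all_algebra.
From mathcomp Require Import zify.

Fixpoint G (k j : nat) : nat := match k with
 | 0 => j
 | 1 => 1 - j
 | k1.+2 => match k1 with
   | 0 => nth 0 [:: 3; 2; 0; 1] j
   | _ => if j < (2^k1).*2 then ((2^k1)*4).-1 - j
          else if j < (2^k1)*3 then G k1 (j - (2^k1).*2) else j - (2^k1).*2
   end end%N.

Lemma G_step k j : (0 < k)%N -> G k.+2 j =
  (if j < (2^k).*2 then ((2^k)*4).-1 - j
   else if j < (2^k)*3 then G k (j - (2^k).*2) else j - (2^k).*2)%N.
Proof. by case: k. Qed.

Lemma sinv_odd k m : sinv k.+1 (m.*2.+1) = sinv k m.+1.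
Proof. by rewrite /= odd_double /= doubleK. Qed.

Lemma sinv_even k m : sinv k.+1 (m.*2) = (2^k.+1 + 1 - sinv k m)%N.
Proof. by rewrite /= odd_double /= doubleK. Qed.

Lemma sinv_range k n : (0 < sinv k n <= 2^k)%N.
Proof.
elim: k n => [|k IH] n //=.
case: ifP => _; set s := sinv _ _; have : (0 < s <= 2^k)%N by apply: IH.
  all: rewrite expnS; lia.
Qed.

Lemma sinv_surj k v : (0 < v <= 2^k)%N -> exists n, (0 < n <= 2^k)%N /\ sinv k n = v.
Proof.
elim: k v => [|k IH] v Hv.
  by exists 1%N; rewrite /= expn0 in Hv *; split; lia.
case: (leqP v (2^k)) => Hvk.
  have Hv' : (0 < v <= 2^k)%N.
  lia.
  have [n [Hn <-]] := IH v Hv'.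
  exists (n.-1).*2.+1; split; last by rewrite sinv_odd prednK //; lia.
  rewrite expnS; lia.
have Hv' : (0 < 2^k.+1 + 1 - v <= 2^k)%N by rewrite expnS in Hv *; lia.
have [n [Hn Hs]] := IH _ Hv'.
exists n.*2; rewrite sinv_even Hs; split; rewrite expnS in Hv *; lia.
Qed.

Definition P k := forall m, (m < 2^k)%N -> G k (sinv k m.+1).-1 = (sinvc k m.+2).-1.

Lemma par m : exists q, m = q.*2 \/ m = q.*2.+1.
Proof. by exists m./2; rewrite -{1 3}(odd_double_half m); case: odd; [right|left]. Qed.

Lemma key_step k : (0<k)%N -> P k -> P k.+2.
Proof.
move=> k0 IH m Hm; rewrite /sinvc.
have [q [Hq | Hq]] := par m; subst m.
- have -> : (q.*2.+2 == (2^k.+2).+1) = false by apply/eqP; rewrite !expnS in Hm *; lia.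
  have -> : q.*2.+2 = (q.+1).*2 by lia.
  rewrite sinv_odd sinv_even.
  have := sinv_range k.+1 q.+1; set v := sinv _ _ => Hv.
  rewrite G_step //; rewrite !expnS in Hv *.
  case: ifP => H1; [|case: ifP => H2]; lia.
have -> : q.*2.+2 = (q.+1).*2 by lia.
rewrite sinv_even.
have [p [Hp0 | Hp0]] := par q; subst q.
- rewrite sinv_odd.
  have -> : ((p.*2.+1).*2.+1 == (2^k.+2).+1) = false by apply/eqP; rewrite !expnS; lia.
  rewrite sinv_odd.
  have -> : (p.*2).+2 = (p.+1).*2 by lia.
  rewrite sinv_even.
  have := sinv_range k p.+1; set w := sinv _ _ => Hw.
  rewrite G_step //; rewrite !expnS in Hw *.
  case: ifP => H1; [|case: ifP => H2]; lia.
have -> : (p.*2.+1).+1 = (p.+1).*2 by lia.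
rewrite sinv_even.
have := sinv_range k p.+1; set w := sinv k p.+1 => Hw.
have Hp : (p < 2^k)%N by rewrite !expnS in Hm; lia.
have := IH p Hp; rewrite /sinvc.
case: eqP => Hq.
- have -> : (((p.+1).*2).*2.+1 == (2^k.+2).+1) = true by apply/eqP; rewrite !expnS; lia.
  rewrite (sinv_odd k.+1 0) (sinv_odd k 0).
  have := sinv_range k 1; set u := sinv k 1 => Hu.
  rewrite G_step //; rewrite !expnS in Hw *.
  set g := G k _ => Hg.
  case: ifP => H1; [|case: ifP => H2]; try lia.
  have -> : ((2 * (2 * 2 ^ k) + 1 - (2 * 2 ^ k + 1 - w)).-1 - (2 ^ k).*2) = w.-1 by lia.
  exact Hg.
have -> : (((p.+1).*2).*2.+1 == (2^k.+2).+1) = false by apply/eqP; rewrite !expnS; lia.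
rewrite sinv_odd sinv_odd.
have := sinv_range k p.+2; set u := sinv k p.+2 => Hu.
rewrite G_step //; rewrite !expnS in Hw *.
set g := G k _ => Hg.
case: ifP => H1; [|case: ifP => H2]; try lia.
have -> : ((2 * (2 * 2 ^ k) + 1 - (2 * 2 ^ k + 1 - w)).-1 - (2 ^ k).*2) = w.-1 by lia.
exact Hg.
Qed.

Lemma P_all k : (0 < k)%N -> P k.
Proof.
suff H : forall k, P k.+1 /\ P k.+2 by case: k => // k _; case: (H k).
clear k; elim=> [|k [IH1 IH2]].
  split; move=> m; [case: m => [|[|m]] //| case: m => [|[|[|[|m]]]] //].
split=> //; exact: key_step.
Qed.

Lemma G_range k j : (0 < k)%N -> (j < 2^k)%N -> (G k j < 2^k)%N.
Proof.
suff H : forall k, (forall j, j < 2^k.+1 -> G k.+1 j < 2^k.+1)%N /\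
                   (forall j, j < 2^k.+2 -> G k.+2 j < 2^k.+2)%N.
  by case: k => // k _; case: (H k) => H1 _; apply: H1.
clear k j; elim=> [|k [IH1 IH2]].
  split; move=> j; [case: j => [|[|j]] //| case: j => [|[|[|[|j]]]] //].
split=> // j Hj; rewrite G_step //.
have := IH1 (j - (2^k.+1).*2)%N.
rewrite !expnS in Hj *; case: ifP => H1; [|case: ifP => H2]; lia.
Qed.
Import GRing.Theory.
Local Open Scope ring_scope.

Lemma zero_b (R : nzRingType) (c : bool) : c = false -> 0 = c%:R :> R.
Proof. by move=> ->. Qed.
Lemma nat_b (R : nzRingType) (b c : bool) : b = c -> b%:R = c%:R :> R.
Proof. by move=> ->. Qed.

Lemma Amx_step (R : nzRingType) k : (0 < k)%N ->
  (forall i j : 'I_(2^k), Amx R k i j = (i == G k j :> nat)%:R) ->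
  forall i j : 'I_(2^k.+2), Amx R k.+2 i j = (i == G k.+2 j :> nat)%:R.
Proof.
case: k => // k _ IH i j.
change (Amx R k.+3) with (Ablock (Amx R k.+1)).
rewrite G_step // /Ablock castmxE.
have Grange : forall j0, (j0 < 2^k.+1)%N -> (G k.+1 j0 < 2^k.+1)%N by move=> j0; apply: G_range.
set B := Amx R k.+1 in IH *; set g := G k.+1 in IH Grange *.
have Hi := ltn_ord i; have Hj := ltn_ord j.
move: (k.+1) B g IH Grange i j Hi Hj => {}k B g IH Grange i j Hi Hj.
rewrite mxE; case: splitP => [i1 /= Hi1 | i2 /= Hi2];
  last (rewrite mxE; case: splitP => [i1 /= Hi21 | i3 /= Hi22]);
  rewrite mxE; case: splitP => [j1 /= Hj1 | j2 /= Hj2];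
  try (rewrite mxE; case: splitP => [j3 /= Hj21 | j4 /= Hj22]);
  rewrite ?mxE.
all: have e1 : (2^k.+1 = 2 * 2^k)%N := expnS 2 k.
2: { have E : (j - (2^k).*2)%N = j3 by lia.
     have Hj3 := ltn_ord j3.
     rewrite IH; apply: nat_b; rewrite ifF; last by lia.
     rewrite ifT; last by lia.
     by rewrite E Hi1. }
all: first [ apply: zero_b | apply: nat_b ].
all: rewrite -?Hi1 -?Hj1; try have := ltn_ord j1; try have := ltn_ord j2;
  try have := ltn_ord j3; try have := ltn_ord j4;
  try have := ltn_ord i1; try have := ltn_ord i2; try have := ltn_ord i3.
all: have := Grange (j - (2^k).*2)%N.
all: case: ifP => H1; [|case: ifP => H2].
all: move=> Gr *; try (have {}Gr : (g (j - (2 ^ k).*2) < 2 ^ k)%N by apply: Gr; lia).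
all: try (apply/eqP; lia).
all: try (apply/eqP/eqP => H; lia).
rewrite -(inj_eq val_inj) /=; apply/eqP/eqP => H; lia.
Qed.

Lemma Amx_all (R : nzRingType) k : (0 < k)%N ->
  forall i j : 'I_(2^k), Amx R k i j = (i == G k j :> nat)%:R.
Proof.
suff H : forall k, (forall i j : 'I_(2^k.+1), Amx R k.+1 i j = (i == G k.+1 j :> nat)%:R) /\
  (forall i j : 'I_(2^k.+2), Amx R k.+2 i j = (i == G k.+2 j :> nat)%:R).
  by case: k => // k _; case: (H k).
clear k; elim=> [|k [IH1 IH2]].
  split=> i j.
    by rewrite /= mxE; case: i => [[|[|i]] Hi] //; case: j => [[|[|j]] Hj].
  by rewrite /= mxE; case: i => [[|[|[|[|i]]]] Hi] //; case: j => [[|[|[|[|j]]]] Hj].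
by split=> //; apply: Amx_step.
Qed.

Theorem theorem2 (R : nzRingType) (k : nat) : (1 <= k)%N -> Pmx R k = Amx R k.
Proof.
move=> k0; apply/matrixP => i j.
rewrite Amx_all // /Pmx mxE; apply: nat_b.
have Hi := ltn_ord i; have Hj := ltn_ord j.
have Pk := P_all k k0.
apply/existsP/eqP.
- case=> m /andP [/eqP Hi1 /eqP Hj1].
  have Hm := ltn_ord m.
  rewrite /sinvc ifF in Hj1; last by apply/eqP; lia.
  have := Pk m Hm; rewrite -Hj1 /= -Hi1 /=; lia.
- move=> Hij.
  have Hv : (0 < j.+1 <= 2^k)%N by lia.
  have [n [Hn Hs]] := sinv_surj _ _ Hv.
  have Hm : (n.-1 < 2^k)%N by lia.
  exists (Ordinal Hm) => /=.
  have Hn1 : n.-1.+1 = n by lia.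
  rewrite Hn1.
  have -> : sinvc k n = sinv k n by rewrite /sinvc ifF //; apply/eqP; lia.
  rewrite Hs eqxx andbT.
  have := Pk _ Hm; rewrite Hn1 Hs /= -Hij.
  have : (0 < sinvc k n.+1)%N by rewrite /sinvc; case: ifP => _; [case/andP: (sinv_range k 1) | case/andP: (sinv_range k n.+1)].
  move=> H1 H2; apply/eqP; lia.
Qed.
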